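(* Let $\{s_k\}_{k\in\mathbb{N}_0}$ be a positive sequence and let $\{\ell_k\}_{k\in\mathbb{N}_0}$ be a sequence of nonnegative integers such that $\{a^{\ell_k}\}_{k\in\mathbb{N}_0}$ is a positive sequence for every $a\in\mathbb{R}$. Then the sequence $\{\tilde s_k\}_{k\in\mathbb{N}_0}$ given by $\tilde s_k=s_{k+\ell_k}$ is a positive sequence.
   Context: A sequence of real numbers $\{s_k\}_{k\in\mathbb{N}_0}$ is called positive if for every $n\in\mathbb{N}_0$ the Hankel matrix $(s_{i+j})_{i,j=0}^n$ is positive semidefinite. The convention $0^0=1$ is used. *)

(* Defs.v *)
From Stdlib Require Import Reals.
Open Scope R_scope.

Definition hankel_psd (s : nat -> R) (n : nat) : Prop :=
  forall c : nat -> R,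
    0 <= sum_f_R0 (fun i => sum_f_R0 (fun j => c i * s (i + j)%nat * c j) n) n.

Definition positive_seq (s : nat -> R) : Prop :=
  forall n : nat, hankel_psd s n.

(* Main.v *)
Require Import Defs.
From Stdlib Require Import Reals Lra Lia Psatz.
Open Scope R_scope.

Lemma sum_swap (f : nat -> nat -> R) (n N : nat) :
  sum_f_R0 (fun p => sum_f_R0 (fun i => f i p) n) N =
  sum_f_R0 (fun i => sum_f_R0 (fun p => f i p) N) n.
Proof.
  induction n as [|n IH]; simpl.
  - reflexivity.
  - rewrite plus_sum, IH. reflexivity.
Qed.

Lemma sum_delta (k N : nat) (v : nat -> R) :
  (k <= N)%nat ->
  sum_f_R0 (fun p => if Nat.eqb p k then v p else 0) N = v k.
Proof.
  induction N as [|N IH]; intros Hk; cbn [sum_f_R0].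
  - assert (k = 0%nat) by lia. subst. reflexivity.
  - destruct (Nat.eq_dec k (S N)) as [->|Hne].
    + rewrite Nat.eqb_refl.
      replace (sum_f_R0 (fun p => if Nat.eqb p (S N) then v p else 0) N) with 0. lra.
      clear. rewrite (sum_eq _ (fun _ => 0)).
      * induction N; simpl; [lra|]. rewrite <- IHN. lra.
      * intros i Hi. destruct (Nat.eqb_spec i (S N)); [lia|reflexivity].
    + replace (Nat.eqb (S N) k) with false by (symmetry; apply Nat.eqb_neq; lia). rewrite IH by lia. lra.
Qed.

Fixpoint bnd (phi : nat -> nat) (n : nat) : nat :=
  match n with 0 => phi 0%nat | S n => Nat.max (bnd phi n) (phi (S n)) end.

Lemma bnd_ge phi n i : (i <= n)%nat -> (phi i <= bnd phi n)%nat.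
Proof.
  induction n; intros H; simpl.
  - assert (i = 0%nat) by lia. subst; lia.
  - destruct (Nat.eq_dec i (S n)) as [->|]; [lia|]. specialize (IHn ltac:(lia)). lia.
Qed.

Lemma reindexL (phi : nat -> nat) (c G : nat -> R) (n N : nat) :
  (forall i, (i <= n)%nat -> (phi i <= N)%nat) ->
  sum_f_R0 (fun p => sum_f_R0 (fun i => if Nat.eqb p (phi i) then c i else 0) n * G p) N =
  sum_f_R0 (fun i => c i * G (phi i)) n.
Proof.
  intros Hb.
  rewrite (sum_eq _ (fun p => sum_f_R0 (fun i => (if Nat.eqb p (phi i) then c i else 0) * G p) n)).
  2:{ intros p _. rewrite Rmult_comm, scal_sum. apply sum_eq. intros; lra. }
  rewrite sum_swap. apply sum_eq. intros i Hi.
  rewrite <- (sum_delta (phi i) N (fun p => c i * G p)) by (apply Hb; lia).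
  apply sum_eq. intros p _. destruct (Nat.eqb p (phi i)); lra.
Qed.

Lemma reindex (s : nat -> R) (hs : positive_seq s) (n : nat) (phi : nat -> nat) (c : nat -> R) :
  0 <= sum_f_R0 (fun i => sum_f_R0 (fun j => c i * s (phi i + phi j)%nat * c j) n) n.
Proof.
  set (N := bnd phi n).
  assert (Hb : forall i, (i <= n)%nat -> (phi i <= N)%nat) by (intros; apply bnd_ge; lia).
  set (d := fun p => sum_f_R0 (fun i => if Nat.eqb p (phi i) then c i else 0) n).
  specialize (hs N d).
  rewrite (sum_eq _ (fun p => d p * sum_f_R0 (fun j => c j * s (p + phi j)%nat) n)) in hs.
  2:{ intros p _. rewrite <- (reindexL phi c (fun q => s (p + q)%nat) n N Hb).
      rewrite scal_sum. apply sum_eq. intros; unfold d; lra. }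
  unfold d in hs. rewrite reindexL in hs by exact Hb.
  eapply Rle_trans; [exact hs|]. right. apply sum_eq. intros i _.
  rewrite scal_sum. apply sum_eq. intros; lra.
Qed.

Lemma pow_exp_eq (p q : nat) : (forall a, 0 < a -> a ^ q <= a ^ p) -> p = q.
Proof.
  intros H. destruct (Nat.lt_total p q) as [Hlt|[Heq|Hlt]]; auto.
  - exfalso. pose proof (Rlt_pow 2 p q ltac:(lra) Hlt). specialize (H 2 ltac:(lra)). lra.
  - exfalso. pose proof (Rlt_pow 2 q p ltac:(lra) Hlt). specialize (H (/2) ltac:(lra)).
    rewrite !pow_inv in H.
    assert (0 < 2 ^ q) by (apply pow_lt; lra).
    assert (0 < 2 ^ p) by (apply pow_lt; lra).
    pose proof (Rinv_lt_contravar (2^q) (2^p) ltac:(nra) H0). lra.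
Qed.

Lemma minor_eq (l : nat -> nat) (hl : forall a : R, positive_seq (fun k => a ^ (l k))) i j :
  (l (i + i) + l (j + j) = l (i + j) + l (i + j))%nat.
Proof.
  apply pow_exp_eq. intros a Ha.
  set (phi := fun k : nat => if Nat.eqb k 0 then i else j).
  set (A := a ^ l (i + i)%nat). set (B := a ^ l (i + j)%nat). set (C := a ^ l (j + j)%nat).
  pose proof (reindex _ (hl a) 1 phi (fun k => if Nat.eqb k 0 then B else - A)) as H.
  simpl in H. unfold phi in H; simpl in H. rewrite (Nat.add_comm j i) in H. fold A B C in H.
  assert (HA : 0 < A) by (apply pow_lt; lra).
  rewrite !pow_add. fold A B C.
  nra.
Qed.

Theorem mainTheorem4 (s : nat -> R) (l : nat -> nat)
  (hs : positive_seq s)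
  (hl : forall a : R, positive_seq (fun k => a ^ (l k))) :
  positive_seq (fun k => s (k + l k)%nat).
Proof.
  assert (Hstep : forall k, (l (S k) + l 0 = l k + l 1)%nat).
  { intros k.
    pose proof (minor_eq l hl 0 k) as E0. pose proof (minor_eq l hl 1 k) as E1.
    pose proof (minor_eq l hl 0 1) as E2. simpl in E0, E1, E2. lia. }
  assert (Hind : forall k, (l k + k * l 0 = l 0 + k * l 1)%nat).
  { induction k; [simpl; lia|]. specialize (Hstep k). nia. }
  assert (Hge : (l 0%nat <= l 1%nat)%nat).
  { destruct (Nat.le_gt_cases (l 0%nat) (l 1%nat)) as [|Hlt]; auto.
    specialize (Hind (S (l 0%nat))). nia. }
  set (m := (l 1%nat - l 0%nat)%nat).
  assert (Hl : forall k, (l k = l 0%nat + k * m)%nat).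
  { intros k. specialize (Hind k). unfold m. nia. }
  assert (Hev : Nat.Even (l 0%nat)).
  { destruct (Nat.Even_or_Odd (l 0%nat)) as [|[h Hh]]; auto. exfalso.
    pose proof (hl (-1) 0%nat (fun _ => 1)) as H. simpl in H.
    rewrite Hh, Nat.add_1_r, pow_1_odd in H. lra. }
  destruct Hev as [h Hh].
  intros n c.
  pose proof (reindex s hs n (fun i => ((m + 1) * i + h)%nat) c) as H.
  eapply Rle_trans; [exact H|]. right. apply sum_eq. intros i _. apply sum_eq. intros j _.
  do 2 f_equal. rewrite (Hl (i + j)%nat), Hh. f_equal. ring.
Qed.
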